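(* Let $q$ be a probability density on $\mathbb{R}^d$, let $\mathcal{K}:\mathbb{R}^d\times\mathbb{R}^d\to\mathbb{R}$ be a symmetric, positive semi-definite, twice continuously differentiable kernel, and let $\bm{x}^1,\dots,\bm{x}^K\in\mathbb{R}^d$ be samples from $q$. Define the kernel matrix $\mathbf{K}\in\mathbb{R}^{K\times K}$ by $\mathbf{K}_{ij}=\mathcal{K}(\bm{x}^i,\bm{x}^j)$ and the matrix $\langle \nabla,\mathbf{K}\rangle\in\mathbb{R}^{K\times d}$ by $\langle \nabla,\mathbf{K}\rangle_{ij}=\sum_{k=1}^K \frac{\partial}{\partial x^k_j}\mathcal{K}(\bm{x}^i,\bm{x}^k)$, where $x^k_j$ is the $j$-th coordinate of $\bm{x}^k$. Let $\eta\ge 0$ be such that $\mathbf{K}+\eta\mathbf{I}$ is invertible, and define the Stein gradient estimator $$\hat{\mathbf{G}}^{\mathrm{Stein}}_V := -(\mathbf{K}+\eta\mathbf{I})^{-1}\langle\nabla,\mathbf{K}\rangle\in\mathbb{R}^{K\times d}.$$ For a matrix $\hat{\mathbf{G}}\in\mathbb{R}^{K\times d}$, write $\hat{\bm{g}}(\bm{x}^k)\in\mathbb{R}^{d}$ for (the transpose of) its $k$-th row, and define the V-statistic of the kernelised Stein discrepancy $$\mathcal{S}_V^2(q,\hat q) := \frac{1}{K^2}\sum_{j=1}^K\sum_{l=1}^K\Big[\hat{\bm{g}}(\bm{x}^j)^{\mathrm T}\mathbf{K}_{jl}\hat{\bm{g}}(\bm{x}^l)+\hat{\bm{g}}(\bm{x}^j)^{\mathrm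 T}\nabla_{\bm{x}^l}\mathcal{K}(\bm{x}^j,\bm{x}^l)+\nabla_{\bm{x}^j}\mathcal{K}(\bm{x}^j,\bm{x}^l)^{\mathrm T}\hat{\bm{g}}(\bm{x}^l)+\mathrm{Tr}\big(\nabla_{\bm{x}^j,\bm{x}^l}\mathcal{K}(\bm{x}^j,\bm{x}^l)\big)\Big],$$ where $\nabla_{\bm{x}^j,\bm{x}^l}\mathcal{K}(\bm{x}^j,\bm{x}^l)$ is the $d\times d$ matrix of mixed second partial derivatives. Then $$\hat{\mathbf{G}}^{\mathrm{Stein}}_V=\operatorname*{argmin}_{\hat{\mathbf{G}}\in\mathbb{R}^{K\times d}}\ \mathcal{S}_V^2(q,\hat q)+\frac{\eta}{K^2}\|\hat{\mathbf{G}}\|_F^2,$$ where $\|\cdot\|_F$ is the Frobenius norm.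
   Context: Here $\hat{\mathbf{G}}$ is viewed as an approximation of the matrix whose $k$-th row is $\nabla_{\bm{x}}\log q(\bm{x}^k)^{\mathrm T}$, i.e. $\hat{\bm{g}}(\bm{x}^k)$ plays the role of $\nabla_{\bm{x}}\log\hat q(\bm{x}^k)$ for some approximating density $\hat q$; the objective depends on $\hat q$ only through the values $\hat{\bm{g}}(\bm{x}^k)$, $k=1,\dots,K$. *)

(* Defs.v *)
From HB Require Import structures.
From mathcomp Require Import all_boot all_order all_algebra.
From mathcomp Require Import all_classical all_reals.
From mathcomp Require Import topology normedtype derive.
Set Implicit Arguments. Unset Strict Implicit. Unset Printing Implicit Defensive.
Import Order.TTheory GRing.Theory Num.Theory.
Import numFieldNormedType.Exports.
Local Open Scope ring_scope.

Section SteinDefs.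
Variables (R : realType) (d K : nat).

Definition kernel := 'rV[R]_d -> 'rV[R]_d -> R.

Definition evec (a : 'I_d) : 'rV[R]_d := delta_mx 0 a.

Definition d2k (k : kernel) (a : 'I_d) (x y : 'rV[R]_d) : R :=
  'D_(evec a) (fun z => k x z) y.
Definition d1k (k : kernel) (a : 'I_d) (x y : 'rV[R]_d) : R :=
  'D_(evec a) (fun z => k z y) x.
Definition d12k (k : kernel) (a b : 'I_d) (x y : 'rV[R]_d) : R :=
  'D_(evec a) (fun z => d2k k b z y) x.

Definition kernel_symmetric (k : kernel) := forall x y, k x y = k y x.

Definition kernel_psd (k : kernel) :=
  forall (n : nat) (z : 'I_n -> 'rV[R]_d) (c : 'I_n -> R),
    0 <= \sum_(i < n) \sum_(j < n) c i * c j * k (z i) (z j).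

Definition C2 (V : normedModType R) (F : V -> R) :=
  [/\ (forall u p, derivable F p u),
      (forall u, continuous ('D_u F)),
      (forall u v p, derivable ('D_u F) p v) &
      (forall u v, continuous ('D_v ('D_u F)))].

Definition kernel_C2 (k : kernel) :=
  C2 (fun p : 'rV[R]_d * 'rV[R]_d => k p.1 p.2).

Definition kmat (k : kernel) (x : 'I_K -> 'rV[R]_d) : 'M[R]_K :=
  \matrix_(i, j) k (x i) (x j).

Definition gradK (k : kernel) (x : 'I_K -> 'rV[R]_d) : 'M[R]_(K, d) :=
  \matrix_(i, j) \sum_(l < K) d2k k j (x i) (x l).

Definition stein_est (k : kernel) (x : 'I_K -> 'rV[R]_d) (eta : R) : 'M[R]_(K, d) :=
  - (invmx (kmat k x + eta%:M) *m gradK k x).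

Definition SV2 (k : kernel) (x : 'I_K -> 'rV[R]_d) (G : 'M[R]_(K, d)) : R :=
  (K%:R ^+ 2)^-1 * \sum_(j < K) \sum_(l < K)
    ( (\sum_(a < d) G j a * kmat k x j l * G l a)
    + (\sum_(a < d) G j a * d2k k a (x j) (x l))
    + (\sum_(a < d) d1k k a (x j) (x l) * G l a)
    + (\sum_(a < d) d12k k a a (x j) (x l)) ).

Definition frob2 (G : 'M[R]_(K, d)) : R := \sum_(i < K) \sum_(a < d) G i a ^+ 2.

Definition stein_obj (k : kernel) (x : 'I_K -> 'rV[R]_d) (eta : R)
  (G : 'M[R]_(K, d)) : R :=
  SV2 k x G + eta / (K%:R ^+ 2) * frob2 G.

End SteinDefs.

(* Main.v *)
Require Import Defs.
From HB Require Import structures.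
From mathcomp Require Import all_boot all_order all_algebra.
From mathcomp Require Import all_classical all_reals.
From mathcomp Require Import topology normedtype derive.
From mathcomp Require Import ring lra.
Import Order.TTheory GRing.Theory Num.Theory.
Local Open Scope ring_scope.

Section BF.
Variables (R : realType) (n : nat) (M : 'M[R]_n).
Hypothesis Msym : forall i j, M i j = M j i.
Hypothesis Mpsd : forall u : 'I_n -> R,
  0 <= \sum_j \sum_l u j * M j l * u l.

Definition bf (u v : 'I_n -> R) := \sum_j \sum_l u j * M j l * v l.
Definition Mv (v : 'I_n -> R) j := \sum_l M j l * v l.

Lemma bfE u v : bf u v = \sum_j u j * Mv v j.
Proof.
by apply: eq_bigr => j _; rewrite /Mv mulr_sumr; apply: eq_bigr => l _; rewrite mulrA.
Qed.

Lemma bf_sym u v : bf u v = bf v u.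
Proof.
rewrite /bf exchange_big; apply: eq_bigr => l _; apply: eq_bigr => j _.
by rewrite Msym; ring.
Qed.

Lemma bfl a b u v w :
  bf (fun j => a * u j + b * v j) w = a * bf u w + b * bf v w.
Proof.
rewrite /bf !mulr_sumr -big_split; apply: eq_bigr => j _.
rewrite !mulr_sumr -big_split; apply: eq_bigr => l _ /=; ring.
Qed.

Lemma bfr a b u v w :
  bf w (fun j => a * u j + b * v j) = a * bf w u + b * bf w v.
Proof. by rewrite bf_sym bfl (bf_sym u w) (bf_sym v w). Qed.

Lemma bf_sub u v :
  bf (fun j => u j - v j) (fun j => u j - v j) = bf u u - 2 * bf u v + bf v v.
Proof.
have -> : (fun j => u j - v j) = (fun j => 1 * u j + (-1) * v j).
  by apply: funext => j; ring.
rewrite bfl !bfr (bf_sym v u); ring.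
Qed.

Lemma bf_zero u : bf u u = 0 -> forall j, Mv u j = 0.
Proof.
move=> h0.
set w := Mv u.
have hs : bf w u = \sum_j w j ^+ 2.
  by rewrite bfE; apply: eq_bigr => j _; rewrite expr2.
have key : forall t, 0 <= 2 * t * bf w u + t ^+ 2 * bf w w.
  move=> t; have := Mpsd (fun j => 1 * u j + t * w j).
  rewrite -/(bf _ _) bfl !bfr (bf_sym u w) h0.
  move=> h; nra.
have a0 : 0 <= bf w w by apply: Mpsd.
have s0 : 0 <= bf w u by rewrite hs; apply: sumr_ge0 => j _; exact: sqr_ge0.
have sz : bf w u = 0.
  set s := bf w u in s0 key *; set a := bf w w in a0 key *.
  have := key (- s / (a + 1)).
  set t := - s / (a + 1).
  have ht : t * (a + 1) = - s by rewrite /t mulrVK // unitfE; apply/negP => /eqP; lra.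
  move=> h; nra.
move: sz; rewrite hs => sz j.
have := psumr_eq0P (fun i _ => sqr_ge0 (w i)) sz (i := j) isT.
by move/eqP; rewrite sqrf_eq0 => /eqP.
Qed.

End BF.
Arguments bf {R n}.
Arguments Mv {R n}.
Arguments bf_zero {R n M}.
Arguments bfE {R n}.
Arguments bf_sub {R n M}.

Theorem theorem1 (R : realType) (d K : nat) (k : kernel R d)
  (x : 'I_K -> 'rV[R]_d) (eta : R) :
  kernel_symmetric k -> kernel_psd k -> kernel_C2 k ->
  0 <= eta -> kmat k x + eta%:M \in unitmx ->
  (forall G : 'M[R]_(K, d), stein_obj k x eta (stein_est k x eta) <= stein_obj k x eta G) /\
  (forall G : 'M[R]_(K, d), stein_obj k x eta G <= stein_obj k x eta (stein_est k x eta) ->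
     G = stein_est k x eta).
Proof.
move=> ksym kpsd _ eta0 Mu.
set M := kmat k x + eta%:M.
have ME j l : M j l = kmat k x j l + eta *+ (j == l) by rewrite /M !mxE.
have Msym j l : M j l = M l j by rewrite !ME !mxE ksym eq_sym.
have rowE (u : 'I_K -> R) j :
    \sum_l u j * M j l * u l = \sum_l u j * kmat k x j l * u l + eta * u j ^+ 2.
  have hd : \sum_l u j * (eta *+ (j == l)) * u l = eta * u j ^+ 2.
    rewrite (bigD1 j) //= eqxx mulr1n big1 => [|l hl]; first by ring.
    by rewrite eq_sym (negbTE hl) mulr0n mulr0 mul0r.
  rewrite -hd -big_split; apply: eq_bigr => l _ /=; rewrite ME; ring.
have Mpsd u : 0 <= \sum_j \sum_l u j * M j l * u l.
  under eq_bigr => j _ do rewrite rowE.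
  rewrite big_split /= -mulr_sumr; apply: addr_ge0.
    have := kpsd K x u; congr (0 <= _); apply: eq_bigr => i _; apply: eq_bigr => j _.
    by rewrite mxE; ring.
  by apply: mulr_ge0 => //; apply: sumr_ge0 => j _; exact: sqr_ge0.
set B := gradK k x.
set Gs := stein_est k x eta.
have hMv a j : Mv M (fun l => Gs l a) j = - B j a.
  have : (M *m (- (invmx M *m B))) j a = - B j a.
    by rewrite mulmxN mulmxA mulmxV // mul1mx mxE.
  by move=> <-; rewrite [in RHS]mxE.
set C := \sum_j \sum_l \sum_(a < d) d12k k a a (x j) (x l).
have hobj G : stein_obj k x eta G = (K%:R ^+ 2)^-1 *
    (\sum_(a < d) (bf M (fun j => G j a) (fun j => G j a)
        + 2 * \sum_j B j a * G j a) + C).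
  rewrite /stein_obj /SV2.
  have E1 : \sum_j \sum_l \sum_(a < d) G j a * kmat k x j l * G l a + eta * frob2 G
      = \sum_(a < d) bf M (fun j => G j a) (fun j => G j a).
    rewrite /bf /frob2.
    under [RHS]eq_bigr => a _ do under eq_bigr => j _ do rewrite (rowE (fun j => G j a) j).
    under [RHS]eq_bigr => a _ do rewrite big_split /=.
    rewrite big_split /=; congr (_ + _).
      under eq_bigr => j _ do rewrite exchange_big.
      by rewrite exchange_big.
    by rewrite exchange_big mulr_sumr; apply: eq_bigr => a _; rewrite mulr_sumr.
  have E2 : \sum_j \sum_l \sum_(a < d) G j a * d2k k a (x j) (x l)
      = \sum_(a < d) \sum_j B j a * G j a.
    under eq_bigr => j _ do rewrite exchange_big.
    rewrite exchange_big; apply: eq_bigr => a _; apply: eq_bigr => j _.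
    by rewrite mxE mulr_suml; apply: eq_bigr => l _; rewrite mulrC.
  have E3 : \sum_j \sum_l \sum_(a < d) d1k k a (x j) (x l) * G l a
      = \sum_(a < d) \sum_j B j a * G j a.
    rewrite -E2 exchange_big; apply: eq_bigr => j _; apply: eq_bigr => l _.
    apply: eq_bigr => a _; rewrite mulrC; congr (_ * _).
    rewrite /d1k /d2k.
    by have -> : (fun z => k z (x j)) = (fun z => k (x j) z) by apply: funext => z; rewrite ksym.
  under eq_bigr => j _ do rewrite !big_split /=.
  rewrite !big_split /= -E1 E2 E3 /C -mulr_sumr; ring.
have hlin (H : 'M[R]_(K, d)) a :
    \sum_j B j a * H j a = - bf M (fun j => H j a) (fun j => Gs j a).
  rewrite bfE -sumrN; apply: eq_bigr => j _; rewrite hMv; ring.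
have hdiff G : stein_obj k x eta G - stein_obj k x eta Gs = (K%:R ^+ 2)^-1 *
    \sum_(a < d) bf M (fun j => G j a - Gs j a) (fun j => G j a - Gs j a).
  rewrite !hobj -mulrBr; congr (_ * _).
  rewrite opprD addrACA subrr addr0 -sumrB; apply: eq_bigr => a _.
  rewrite bf_sub // !hlin; ring.
have Sge0 G : 0 <= \sum_(a < d) bf M (fun j => G j a - Gs j a) (fun j => G j a - Gs j a).
  by apply: sumr_ge0 => a _; exact: Mpsd.
split=> G.
  rewrite -subr_ge0 hdiff; apply: mulr_ge0 => //.
  by rewrite invr_ge0; apply: exprn_ge0; exact: ler0n.
move=> h.
case: (posnP K) => [K0|Kpos].
  by apply/matrixP => -[i hi] j; exfalso; move: hi; rewrite K0.
have c1pos : 0 < (K%:R ^+ 2 : R)^-1 by rewrite invr_gt0 exprn_gt0 // ltr0n.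
have S0 : \sum_(a < d) bf M (fun j => G j a - Gs j a) (fun j => G j a - Gs j a) = 0.
  apply/eqP; rewrite eq_le Sge0 andbT.
  have : stein_obj k x eta G - stein_obj k x eta Gs <= 0 by rewrite subr_le0.
  rewrite hdiff => h2; rewrite -(pmulr_rle0 _ c1pos); exact: h2.
apply/matrixP => j a.
have ha := psumr_eq0P (fun a _ => Mpsd (fun j => G j a - Gs j a)) S0 (i := a) isT.
have hz := bf_zero Msym Mpsd _ ha.
set v : 'cV[R]_K := \col_j (G j a - Gs j a).
have Mv0 : M *m v = 0.
  apply/matrixP => i z; rewrite (ord1 z) !mxE -[RHS](hz i).
  by apply: eq_bigr => l _; rewrite !mxE.
have v0 : v = 0 by rewrite -(mulKmx Mu v) Mv0 mulmx0.
have := congr1 (fun m : 'cV[R]_K => m j 0) v0; rewrite !mxE => /eqP.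
by rewrite subr_eq0 => /eqP.
Qed.
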